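(* Let $n,m$ be positive integers, $A_1,\dots,A_m\in\mathbb{S}_n$, $\mathcal{A}(X)=(\langle A_i,X\rangle)_{i=1}^m$, $\mathcal{A}^*(y)=\sum_i y_iA_i$, with $\mathcal{A}\mathcal{A}^*$ invertible; let $b\in\mathbb{R}^m$, $C\in\mathbb{S}_n$, $D:=\mathcal{A}^*((\mathcal{A}\mathcal{A}^* )^{-1}b)$, $\mathcal{M}=\{S\in\mathbb{S}_n^+:\operatorname{diag}(S)=\mathbf{1}\}$, and $$L_\sigma(S,y,\widetilde{X})=\langle D,S+C\rangle-\langle\widetilde{X},\mathcal{A}^*(y)-S-C\rangle+\tfrac{\sigma}{2}\|\mathcal{A}^*(y)-S-C\|^2 .$$ Let $y^0\in\mathbb{R}^m$, $\widetilde{X}^0\in\mathbb{S}_n$, let $\sigma_k>0$ for all $k\ge0$, and for $k=0,1,2,\dots$ let $S^{k+1}\in\arg\min_{S\in\mathcal{M}}L_{\sigma_k}(S,y^k,\widetilde{X}^k)$, $y^{k+1}\in\arg\min_{y\in\mathbb{R}^m}L_{\sigma_k}(S^{k+1},y,\widetilde{X}^k)$, and $\widetilde{X}^{k+1}=\widetilde{X}^k-\sigma_k(\mathcal{A}^*(y^{k+1})-S^{k+1}-C)$. Then $\mathcal{A}(\widetilde{X}^{k+1})=0$ for every $k\ge0$. Moreover, for every $k\ge1$, the subproblem $\min_{y\in\mathbb{R}^m}L_{\sigma_k}(S^{k+1},y,\widetilde{X}^k)$ has the closed-form solution $y^{k+1}=(\mathcal{A}\mathcal{A}^* )^{-1}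\mathcal{A}(S^{k+1}+C)$.
   Context: $\mathbb{S}_n$ ($\mathbb{S}_n^+$) denotes real symmetric (positive semidefinite) $n\times n$ matrices, $\langle A,B\rangle=\mathrm{Tr}(A^{\intercal}B)$, $\|\cdot\|$ the Frobenius norm, $\operatorname{diag}(S)$ the vector of diagonal entries, $\mathbf{1}$ the all-ones vector. *)

(* Defs.v *)
From HB Require Import structures.
From mathcomp Require Import all_boot all_order all_algebra.
From mathcomp Require Import reals.
Set Implicit Arguments. Unset Strict Implicit. Unset Printing Implicit Defensive.
Import Order.TTheory GRing.Theory Num.Theory.
Local Open Scope ring_scope.

Section Defs.
Variable R : realType.

Definition mxinner (n : nat) (A B : 'M[R]_n) : R := \tr (A^T *m B).

Definition frob_sq (n : nat) (A : 'M[R]_n) : R := mxinner A A.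

Definition symmx (n : nat) (S : 'M[R]_n) : Prop := S^T = S.

Definition psd (n : nat) (S : 'M[R]_n) : Prop :=
  symmx S /\ forall x : 'cV[R]_n, 0 <= (x^T *m S *m x) 0 0.

Definition Aop (n m : nat) (A : 'I_m -> 'M[R]_n) (X : 'M[R]_n) : 'cV[R]_m :=
  \col_i mxinner (A i) X.

Definition Aadj (n m : nat) (A : 'I_m -> 'M[R]_n) (y : 'cV[R]_m) : 'M[R]_n :=
  \sum_i y i 0 *: A i.

(* matrix of the operator AopAadj : R^m -> R^m *)
Definition AAadj (n m : nat) (A : 'I_m -> 'M[R]_n) : 'M[R]_m :=
  \matrix_(i, j) mxinner (A i) (A j).

Definition elliptope (n : nat) (S : 'M[R]_n) : Prop :=
  psd S /\ forall i, S i i = 1.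

Definition Dmat (n m : nat) (A : 'I_m -> 'M[R]_n) (b : 'cV[R]_m) : 'M[R]_n :=
  Aadj A (invmx (AAadj A) *m b).

Definition Lag (n m : nat) (A : 'I_m -> 'M[R]_n) (b : 'cV[R]_m) (C : 'M[R]_n)
  (sigma : R) (S : 'M[R]_n) (y : 'cV[R]_m) (Xt : 'M[R]_n) : R :=
  mxinner (Dmat A b) (S + C) - mxinner Xt (Aadj A y - S - C)
  + sigma / 2 * frob_sq (Aadj A y - S - C).

End Defs.

(* Main.v *)
Require Import Defs.
From HB Require Import structures.
From mathcomp Require Import all_boot all_order all_algebra.
From mathcomp Require Import reals.
From mathcomp Require Import ring lra.
Import Order.TTheory GRing.Theory Num.Theory.
Local Open Scope ring_scope.

Set Implicit Arguments.
Section Helpers.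
Variable R : realType.

Lemma innerC n (A B : 'M[R]_n) : mxinner A B = mxinner B A.
Proof. by rewrite /mxinner -mxtrace_tr trmx_mul trmxK. Qed.

Lemma innerDr n (A B C : 'M[R]_n) : mxinner A (B + C) = mxinner A B + mxinner A C.
Proof. by rewrite /mxinner mulmxDr mxtraceD. Qed.

Lemma innerZr n (A B : 'M[R]_n) t : mxinner A (t *: B) = t * mxinner A B.
Proof. by rewrite /mxinner -scalemxAr mxtraceZ. Qed.

Lemma innerBr n (A B C : 'M[R]_n) : mxinner A (B - C) = mxinner A B - mxinner A C.
Proof. by rewrite -scaleN1r innerDr innerZr; ring. Qed.

Lemma innerDl n (A B C : 'M[R]_n) : mxinner (B + C) A = mxinner B A + mxinner C A.
Proof. by rewrite innerC innerDr !(innerC A). Qed.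

Lemma innerZl n (A B : 'M[R]_n) t : mxinner (t *: B) A = t * mxinner B A.
Proof. by rewrite innerC innerZr innerC. Qed.

Lemma innerSr n m (A : 'M[R]_n) (F : 'I_m -> 'M[R]_n) :
  mxinner A (\sum_i F i) = \sum_i mxinner A (F i).
Proof. by rewrite /mxinner mulmx_sumr linear_sum. Qed.

Lemma AadjD n m (A : 'I_m -> 'M[R]_n) y d t :
  Aadj A (y + t *: d) = Aadj A y + t *: Aadj A d.
Proof.
rewrite /Aadj scaler_sumr -big_split /=; apply: eq_bigr => i _.
by rewrite !mxE scalerDl scalerA.
Qed.

Lemma Aadj_e n m (A : 'I_m -> 'M[R]_n) i :
  Aadj A (\col_j (j == i)%:R) = A i.
Proof.
rewrite /Aadj (bigD1 i) //= big1 ?addr0.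
  by rewrite mxE eqxx scale1r.
by move=> j Hj; rewrite mxE (negbTE Hj) scale0r.
Qed.

Lemma lag_expand n m (A : 'I_m -> 'M[R]_n) b C s S y d X t :
  Lag A b C s S (y + t *: d) X = Lag A b C s S y X
   + t * (s * mxinner (Aadj A y - S - C) (Aadj A d) - mxinner X (Aadj A d))
   + t ^+ 2 * (s / 2 * frob_sq (Aadj A d)).
Proof.
rewrite /Lag /frob_sq AadjD.
have -> : Aadj A y + t *: Aadj A d - S - C = (Aadj A y - S - C) + t *: Aadj A d.
  by rewrite -!addrA [t *: _ + _]addrC -[X in _ + X = _]addrA [- C + _]addrC.
move: (Aadj A y - S - C) (Aadj A d) => M N.
rewrite !innerDr !innerDl !innerZr !innerZl (innerC N M).
move: (mxinner _ _) (mxinner (Dmat A b) C) (mxinner X M) (mxinner X N) (mxinner M M) (mxinner M N) (mxinner N N) => a1 a2 a3 a4 a5 a6 a7. by field.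
Qed.

Lemma quad0 (g c : R) : (forall t, 0 <= t * g + t ^+ 2 * c) -> g = 0.
Proof.
move=> H.
have c0 : 0 <= c.
  have := H 1; have := H (-1); rewrite !expr2; nra.
have c1 : 0 < c + 1 by lra.
have := H (- g / (c + 1)).
set u := (c + 1)^-1.
have hu : u * (c + 1) = 1 by rewrite mulVf // gt_eqF.
have hu0 : 0 < u by rewrite invr_gt0.
rewrite /= expr2 => h.
have : (u * g) ^+ 2 <= 0.
  rewrite expr2; nra.
move=> h2; have : (u * g) ^+ 2 == 0 by rewrite eq_le h2 sqr_ge0.
by rewrite sqrf_eq0 mulf_eq0 (gt_eqF hu0) /= => /eqP.
Qed.

End Helpers.
Unset Implicit Arguments.

Theorem lemma3p1 (R : realType) (n m : nat) (hn : (0 < n)%N) (hm : (0 < m)%N)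
  (A : 'I_m -> 'M[R]_n) (hA : forall i, symmx (A i))
  (hinv : AAadj A \in unitmx)
  (b : 'cV[R]_m) (C : 'M[R]_n) (hC : symmx C)
  (sigma : nat -> R) (hsigma : forall k, 0 < sigma k)
  (Sseq : nat -> 'M[R]_n) (yseq : nat -> 'cV[R]_m) (Xseq : nat -> 'M[R]_n)
  (hX0 : symmx (Xseq 0%N))
  (hS : forall k, elliptope (Sseq k.+1) /\
     forall S, elliptope S ->
       Lag A b C (sigma k) (Sseq k.+1) (yseq k) (Xseq k)
       <= Lag A b C (sigma k) S (yseq k) (Xseq k))
  (hy : forall k, forall y : 'cV[R]_m,
       Lag A b C (sigma k) (Sseq k.+1) (yseq k.+1) (Xseq k)
       <= Lag A b C (sigma k) (Sseq k.+1) y (Xseq k))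
  (hXup : forall k, Xseq k.+1 =
       Xseq k - sigma k *: (Aadj A (yseq k.+1) - Sseq k.+1 - C)) :
  (forall k, Aop A (Xseq k.+1) = 0) /\
  (forall k, (1 <= k)%N ->
     yseq k.+1 = invmx (AAadj A) *m Aop A (Sseq k.+1 + C)).
Proof.
have opt : forall k i, sigma k * mxinner (Aadj A (yseq k.+1) - Sseq k.+1 - C) (A i)
    - mxinner (Xseq k) (A i) = 0.
  move=> k i; apply: (@quad0 _ _ (sigma k / 2 * frob_sq (A i))) => t.
  have := hy k (yseq k.+1 + t *: \col_j (j == i)%:R).
  rewrite lag_expand Aadj_e; lra.
have P1 : forall k, Aop A (Xseq k.+1) = 0.
  move=> k; apply/matrixP => i j; rewrite ord1 !mxE hXup innerBr innerZr.
  have := opt k i; rewrite !(@innerC _ _ (A i)); lra.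
split=> // k; case: k => // k _.
have e : AAadj A *m yseq k.+2 = Aop A (Sseq k.+2 + C).
  apply/matrixP => i j; rewrite ord1 !mxE.
  have := opt k.+1 i.
  have := congr1 (fun M : 'cV[R]_m => M i 0) (P1 k); rewrite !mxE => h0.
  rewrite (@innerC _ _ (Xseq k.+1)) h0 subr0 => /eqP; rewrite mulf_eq0 (gt_eqF (hsigma _)) /=.
  rewrite innerC !innerBr innerDr => /eqP h.
  have -> : \sum_j0 AAadj A i j0 * yseq k.+2 j0 0 = mxinner (A i) (Aadj A (yseq k.+2)).
    rewrite /Aadj innerSr; apply: eq_bigr => j0 _; rewrite mxE innerZr mulrC.
    by [].
  by apply/eqP; rewrite -subr_eq0 opprD addrA h.
by rewrite -e mulKmx.
Qed.
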